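(* Assume $k$ satisfies (A1)–(A3) and $\alpha>1$. Then the function $f_r:(0,\infty)\to\mathbb{R}$, $f_r(c)=\frac{k(c)-r}{c}$, has a unique critical point $c_{opt}$, i.e. a unique $c>0$ with $k'(c)=\frac{k(c)-r}{c}$, and $c_{opt}$ is a global maximizer of $f_r$ on $(0,\infty)$. Moreover, in the sigmoidal case (A3)(ii), $c_{opt}>c_{infl}$.
   Context: Let $r>0$ and let $k:[0,\infty)\to[0,\infty)$ satisfy: (A1) $k(0)=0$, $k$ is continuous and strictly increasing on $[0,\infty)$, and twice differentiable on $(0,\infty)$; (A2) $\lim_{c\to\infty}k(c)=k_{max}<\infty$; (A3) either (i) (concave case) $k''(c)<0$ for all $c>0$, or (ii) (sigmoidal case) there is $c_{infl}>0$ with $k''(c)>0$ for $0<c<c_{infl}$ and $k''(c)<0$ for $c>c_{infl}$. Set $\alpha=k_{max}/r$. *)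

(* Defs.v *)
From Stdlib Require Import Reals.
From Coquelicot Require Import Coquelicot.
Open Scope R_scope.

(* Second derivative of k (meaningful on (0,oo) where k is twice differentiable). *)
Definition k2 (k : R -> R) (c : R) : R := Derive (Derive k) c.

Definition hypA1 (k : R -> R) : Prop :=
  k 0 = 0 /\
  (forall c, 0 <= c -> 0 <= k c) /\
  (forall c, 0 <= c ->
     filterlim k (within (fun x => 0 <= x) (locally c)) (locally (k c))) /\
  (forall x y, 0 <= x -> x < y -> k x < k y) /\
  (forall c, 0 < c -> ex_derive k c) /\
  (forall c, 0 < c -> ex_derive (Derive k) c).

Definition hypA2 (k : R -> R) (kmax : R) : Prop :=
  is_lim k p_infty kmax.

Definition concave_case (k : R -> R) : Prop :=
  forall c, 0 < c -> k2 k c < 0.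

Definition sigmoidal_case (k : R -> R) (c_infl : R) : Prop :=
  0 < c_infl /\
  (forall c, 0 < c -> c < c_infl -> 0 < k2 k c) /\
  (forall c, c_infl < c -> k2 k c < 0).

Definition hypA3 (k : R -> R) : Prop :=
  concave_case k \/ exists c_infl, sigmoidal_case k c_infl.

Definition f_r (k : R -> R) (r c : R) : R := (k c - r) / c.

(* Main.v *)
Require Import Defs.
From Stdlib Require Import Reals Lra Ranalysis5.
From Coquelicot Require Import Coquelicot.
Open Scope R_scope.

Lemma dec_strict (f df : R -> R) a b : a < b ->
  (forall x, a <= x <= b -> is_derive f x (df x)) ->
  (forall x, a < x < b -> df x < 0) -> f b < f a.
Proof.
  intros Hab Hd Hn.
  destruct (MVT_cor2 f df a b Hab) as [c [E Hc]].
  { intros; apply is_derive_Reals; auto. }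
  specialize (Hn c Hc). nra.
Qed.

Lemma inc_strict (f df : R -> R) a b : a < b ->
  (forall x, a <= x <= b -> is_derive f x (df x)) ->
  (forall x, a < x < b -> 0 < df x) -> f a < f b.
Proof.
  intros Hab Hd Hn.
  destruct (MVT_cor2 f df a b Hab) as [c [E Hc]].
  { intros; apply is_derive_Reals; auto. }
  specialize (Hn c Hc). nra.
Qed.

Lemma deriv_nonneg (k : R -> R) c l :
  (forall x y, 0 <= x -> x < y -> k x < k y) -> 0 < c -> is_derive k c l -> 0 <= l.
Proof.
  intros Hinc Hc Hd. apply is_derive_Reals in Hd.
  destruct (Rle_or_lt 0 l) as [H|H]; auto. exfalso.
  assert (He : 0 < - l / 2) by lra.
  destruct (Hd (-l/2) He) as [d Hdd].
  assert (Hd0 := cond_pos d).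
  specialize (Hdd (d/2)).
  assert (Hq : 0 < (k (c + d/2) - k c) / (d/2)).
  { apply Rdiv_lt_0_compat; try lra. assert (k c < k (c + d/2)) by (apply Hinc; lra). lra. }
  assert (Hx : Rabs ((k (c + d/2) - k c) / (d/2) - l) < - l / 2).
  { apply Hdd. lra. rewrite Rabs_right; lra. }
  apply Rabs_def2 in Hx. lra.
Qed.

Theorem lemma1 (k : R -> R) (r kmax : R) :
  0 < r ->
  hypA1 k -> hypA2 k kmax -> hypA3 k ->
  kmax / r > 1 ->
  exists c_opt : R,
    0 < c_opt /\
    Derive k c_opt = f_r k r c_opt /\
    (forall c, 0 < c -> Derive k c = f_r k r c -> c = c_opt) /\
    (forall c, 0 < c -> f_r k r c <= f_r k r c_opt) /\
    (forall c_infl, sigmoidal_case k c_infl -> c_infl < c_opt).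
Proof.
  intros Hr [Hk0 [Hknn [Hcont [Hinc [Hd1 Hd2]]]]] HA2 HA3 Hkm.
  set (g := fun c => c * Derive k c - k c + r).
  assert (H1d : forall c, 0 < c -> is_derive k c (Derive k c)).
  { intros; apply Derive_correct; auto. }
  assert (H2d' : forall c, 0 < c -> is_derive (Derive k) c (k2 k c)).
  { intros; apply Derive_correct; auto. }
  assert (H2d : forall c, 0 < c -> is_derive g c (c * k2 k c)).
  { intros c Hc. unfold g, k2. specialize (Hd1 c Hc). specialize (Hd2 c Hc).
    auto_derive. split; auto.
    change (fun x : R => Derive k x) with (Derive k); change (fun x : R => k x) with k; ring. }
  assert (Hfd : forall c, 0 < c -> is_derive (f_r k r) c (g c / (c * c))).
  { intros c Hc. unfold g, f_r. specialize (Hd1 c Hc).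
    auto_derive. split; auto. lra.
    change (fun x : R => k x) with k; field. lra. }
  assert (Hkp : forall c, 0 < c -> 0 <= Derive k c).
  { intros c Hc. apply (deriv_nonneg k c); auto. }
  assert (Hgc : forall c, 0 < c -> continuity_pt g c).
  { intros c Hc. apply derivable_continuous_pt.
    exists (c * k2 k c). apply is_derive_Reals. apply H2d; auto. }
  assert (Hc0 : exists c0, 0 < c0 /\ forall c, 0 < c <= c0 -> 0 < g c).
  { specialize (Hcont 0 (Rle_refl 0)). rewrite Hk0 in Hcont.
    apply filterlim_locally with (eps := mkposreal r Hr) in Hcont.
    destruct Hcont as [d Hd].
    exists (d/2). split. assert (Hd0 := cond_pos d). lra.
    intros c Hc. assert (Hd0 := cond_pos d).
    assert (Hb : ball 0 (mkposreal r Hr) (k c)).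
    { apply Hd. unfold ball; simpl; unfold AbsRing_ball, abs, minus, plus, opp; simpl.
      rewrite Ropp_0, Rplus_0_r, Rabs_right; lra. lra. }
    unfold ball in Hb; simpl in Hb; unfold AbsRing_ball, abs, minus, plus, opp in Hb; simpl in Hb.
    rewrite Ropp_0, Rplus_0_r in Hb. apply Rabs_def2 in Hb.
    specialize (Hkp c (proj1 Hc)).
    unfold g. assert (0 <= c * Derive k c) by (apply Rmult_le_pos; lra). lra. }
  destruct Hc0 as [c0 [Hc0 Hc0g]].
  assert (Hpos : forall q, (forall c, 0 < c -> c < q -> 0 < k2 k c) ->
                  forall c, 0 < c <= q -> 0 < g c).
  { intros q Hq c Hc. destruct (Rle_or_lt c c0) as [H|H].
    - apply Hc0g; lra.
    - apply Rlt_trans with (g c0). apply Hc0g; lra.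
      apply (inc_strict g (fun x => x * k2 k x)); auto.
      + intros; apply H2d; lra.
      + intros x Hx. apply Rmult_lt_0_compat. lra. apply Hq; lra. }
  assert (Hp : exists p, 0 < p /\ (forall c, 0 < c <= p -> 0 < g c) /\
                         (forall c, p < c -> k2 k c < 0)).
  { destruct HA3 as [Hcc | [ci [Hci [Hci1 Hci2]]]].
    - exists c0. split; auto. split; auto. intros c Hc; apply Hcc; lra.
    - exists ci. split; auto. split; auto. apply Hpos. auto. }
  destruct Hp as [p [Hp0 [Hpg Hpk]]].
  assert (Hdec : forall a b, p <= a -> a < b -> g b < g a).
  { intros a b Ha Hab. apply (dec_strict g (fun x => x * k2 k x)); auto.
    - intros; apply H2d; lra.
    - intros x Hx. assert (k2 k x < 0) by (apply Hpk; lra). nra. }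
  assert (Hkr : kmax > r).
  { assert (kmax = (kmax / r) * r) by (field; lra). nra. }
  assert (HC : exists C, p < C /\ g C < 0).
  { unfold hypA2 in HA2. apply is_lim_spec in HA2.
    assert (He : 0 < (kmax - r) / 4) by lra.
    destruct (HA2 (mkposreal _ He)) as [M HM]. simpl in HM.
    set (a := Rmax M p + 1).
    assert (Ha1 : M < a) by (unfold a; generalize (Rmax_l M p); lra).
    assert (Ha2 : p < a) by (unfold a; generalize (Rmax_r M p); lra).
    exists (2 * a). split. lra.
    destruct (MVT_cor2 k (Derive k) a (2 * a)) as [xi [Exi Hxi]]. lra.
    { intros; apply is_derive_Reals; apply H1d; lra. }
    assert (Hdd : Derive k (2 * a) < Derive k xi).
    { apply (dec_strict (Derive k) (k2 k)). lra.
      intros; apply H2d'; lra. intros; apply Hpk; lra. }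
    assert (Hm : 2 * a * Derive k (2 * a) < 2 * a * Derive k xi) by (apply Rmult_lt_compat_l; lra).
    assert (HMa := HM a Ha1). assert (HM2 := HM (2 * a) ltac:(lra)).
    apply Rabs_def2 in HMa. apply Rabs_def2 in HM2.
    unfold g. nra. }
  destruct HC as [C [HpC HgC]].
  destruct (IVT_interv (fun x => - g x) p C) as [z [Hz Hgz]].
  { intros a Ha. apply continuity_pt_opp. apply Hgc. lra. }
  lra. { assert (0 < g p) by (apply Hpg; lra). lra. } lra.
  assert (Hgz0 : g z = 0) by lra. clear Hgz.
  assert (Hzp : p < z).
  { destruct Hz as [Hz _]. destruct Hz as [Hz|Hz]; auto. subst z.
    assert (0 < g p) by (apply Hpg; lra). lra. }
  assert (Hchar : forall c, 0 < c -> (Derive k c = f_r k r c <-> g c = 0)).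
  { intros c Hc. unfold f_r, g. split; intros H.
    - rewrite H. field. lra.
    - replace (k c - r) with (c * Derive k c) by lra. field. lra. }
  assert (Hgpos : forall x, 0 < x < z -> 0 < g x).
  { intros x Hx. destruct (Rle_or_lt x p) as [H|H].
    - apply Hpg; lra.
    - rewrite <- Hgz0 at 1. apply Hdec; lra. }
  exists z. split. lra. split. apply Hchar; auto; lra.
  split.
  { intros c Hc E. apply Hchar in E; auto.
    destruct (Rle_or_lt c p) as [H|H].
    - assert (0 < g c) by (apply Hpg; lra). lra.
    - destruct (Rtotal_order c z) as [H1|[H1|H1]]; auto.
      + assert (g z < g c) by (apply Hdec; lra). lra.
      + assert (g c < g z) by (apply Hdec; lra). lra. }
  split.
  { intros c Hc. destruct (Rtotal_order c z) as [H1|[H1|H1]].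
    - left. apply (inc_strict (f_r k r) (fun x => g x / (x * x))); auto.
      + intros; apply Hfd; lra.
      + intros x Hx. apply Rdiv_lt_0_compat. apply Hgpos; lra.
        apply Rmult_lt_0_compat; lra.
    - subst; lra.
    - left. apply (dec_strict (f_r k r) (fun x => g x / (x * x))); auto.
      + intros; apply Hfd; lra.
      + intros x Hx. assert (g x < 0) by (rewrite <- Hgz0; apply Hdec; lra).
        assert (0 < / (x * x)) by (apply Rinv_0_lt_compat; apply Rmult_lt_0_compat; lra).
        unfold Rdiv. nra. }
  { intros ci [Hci [Hci1 Hci2]].
    destruct (Rlt_or_le ci z) as [H|H]; auto.
    assert (0 < g z) by (apply (Hpos ci); auto; lra). lra. }
Qed.
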